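(* Let $A$ be a synaptic algebra, $p,q\in P$, and put $r_p:=p\wedge(p^{\perp}\vee q)\wedge(p^{\perp}\vee q^{\perp})$ and $r_q:=q\wedge(p\vee q^{\perp})\wedge(p^{\perp}\vee q^{\perp})$. Then $pCq$ iff $r_p=r_q=0$ iff $r_pCr_q$.
   Context: Synaptic algebra (Foulis): $R$ is a real linear associative algebra with unit $1$, and $A\subseteq R$ is a real linear subspace with $1\in A$. For $a,b\in A$ write $aCb$ iff $ab=ba$; $C(a):=\{b\in A: aCb\}$; $CC(a):=\{b\in A: bCd \text{ for all } d\in C(a)\}$. $A$ is a synaptic algebra with enveloping algebra $R$ iff: (SA1) $A$ is a partially ordered archimedean real linear space with positive cone $A^+$, $1$ is an order unit, $\|\cdot\|$ the order-unit norm; (SA2) $a\in A\Rightarrow a^2\in A^+$; (SA3) $a,b\in A^+\Rightarrow aba\in A^+$; (SA4) if $a\in A$, $b\in A^+$, $aba=0$ then $ab=ba=0$; (SA5) if $a\in A^+$ there is $b\in A^+\cap CC(a)$ with $b^2=a$; (SA6) for $a\in A$ there is $p=p^2\in A$ with $ab=0\Leftrightarrow pb=0$ for all $b\in A$; (SA7) if $1\le a$ there is $b\in A$ with $ab=ba=1$; (SA8) if $a,b\in A$, $a_1\le a_2\le\cdots$ are pairwise commuting elements of $C(b)$ with $\|a-a_n\|\to0$, then $a\in C(b)$. $A$ is nondegenerate. $P:=\{p\in A:p=p^2\}$ with the order inherited from $A$ is an orthomodular lattice with orthocomplement $p^{\perp}:=1-p$, meet $\wedge$, join $\vee$. *)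

(* Defs.v *)
From HB Require Import structures.
From mathcomp Require Import all_boot all_order all_algebra.
From mathcomp Require Import Rstruct.
Set Implicit Arguments. Unset Strict Implicit. Unset Printing Implicit Defensive.
Import Order.TTheory GRing.Theory Num.Theory.
Local Open Scope ring_scope.

Notation Rreal := Rdefinitions.R.

Section Synaptic.
Variable (E : algType Rreal).   (* the enveloping algebra R *)
Variables (A Pos : {pred E}).

Definition sle (a b : E) : Prop := (b - a) \in Pos.

Definition commutes (a b : E) : Prop := a * b = b * a.

Definition CCset (a : E) (b : E) : Prop :=
  b \in A /\ forall d, d \in A -> commutes a d -> commutes b d.

(* ||x|| < eps for the order-unit norm, unfolded: -eps 1 <= x <= eps 1 *)
Definition within (x : E) (eps : Rreal) : Prop :=
  sle (- (eps *: 1)) x /\ sle x (eps *: 1).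

Record synaptic : Prop := {
  sA_0 : 0 \in A;
  sA_1 : 1 \in A;
  sA_add : forall a b, a \in A -> b \in A -> a + b \in A;
  sA_scale : forall (k : Rreal) a, a \in A -> k *: a \in A;
  sA_nondeg : (1 : E) != 0;
  sPos_sub : forall a, a \in Pos -> a \in A;
  sPos_add : forall a b, a \in Pos -> b \in Pos -> a + b \in Pos;
  sPos_scale : forall (k : Rreal) a, 0 <= k -> a \in Pos -> k *: a \in Pos;
  sPos_antisym : forall a, a \in Pos -> - a \in Pos -> a = 0;
  sPos_unit : forall a, a \in A -> exists k : Rreal, sle a (k *: 1);
  sPos_archi : forall a b, a \in A -> b \in A ->
      (forall n : nat, sle (a *+ n) b) -> sle a 0;
  sSA2 : forall a, a \in A -> a * a \in Pos;
  sSA3 : forall a b, a \in Pos -> b \in Pos -> a * b * a \in Pos;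
  sSA4 : forall a b, a \in A -> b \in Pos -> a * b * a = 0 ->
      a * b = 0 /\ b * a = 0;
  sSA5 : forall a, a \in Pos -> exists b, b \in Pos /\ CCset a b /\ b * b = a;
  sSA6 : forall a, a \in A -> exists p, p \in A /\ p * p = p /\
      (forall b, b \in A -> (a * b = 0 <-> p * b = 0));
  sSA7 : forall a, a \in A -> sle 1 a -> exists b, b \in A /\ a * b = 1 /\ b * a = 1;
  sSA8 : forall (a b : E) (u : nat -> E), a \in A -> b \in A ->
      (forall n, u n \in A) ->
      (forall n, sle (u n) (u n.+1)) ->
      (forall m n, commutes (u m) (u n)) ->
      (forall n, commutes (u n) b) ->
      (forall eps : Rreal, 0 < eps -> exists N, forall n, (N <= n)%N -> within (a - u n) eps) ->
      commutes a b
}.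

Definition proj (p : E) : Prop := p \in A /\ p * p = p.

Definition perp (p : E) : E := 1 - p.

Definition is_meetP (x y m : E) : Prop :=
  proj m /\ sle m x /\ sle m y /\
  forall z, proj z -> sle z x -> sle z y -> sle z m.

Definition is_joinP (x y j : E) : Prop :=
  proj j /\ sle x j /\ sle y j /\
  forall z, proj z -> sle x z -> sle y z -> sle j z.

End Synaptic.

(* Main.v *)
Require Import Defs.
From mathcomp Require Import all_boot all_order all_algebra.
From mathcomp Require Import Rstruct.
Import GRing.Theory Num.Theory.
Set Implicit Arguments. Unset Strict Implicit.
Local Open Scope ring_scope.

Section T.
Context (E : algType Rreal) (A Pos : {pred E}) (H : synaptic A Pos).

Lemma A_opp x : x \in A -> - x \in A.
Proof. by move=> hx; rewrite -scaleN1r; apply: (sA_scale H). Qed.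
Lemma A_sub x y : x \in A -> y \in A -> x - y \in A.
Proof. by move=> hx hy; apply: (sA_add H) => //; apply: A_opp. Qed.

Lemma proj_Pos x : proj A x -> x \in Pos.
Proof. by case=> hx hxx; rewrite -hxx; apply: (sSA2 H). Qed.

Lemma proj_perp x : proj A x -> proj A (1 - x).
Proof.
case=> hx hxx; split; first by apply: A_sub => //; apply: (sA_1 H).
by rewrite mulrBl mul1r mulrBr mulr1 hxx subrr subr0.
Qed.

Lemma le_prod z x : proj A z -> proj A x -> sle Pos z x -> z * x = z /\ x * z = z.
Proof.
move=> hz hx hle.
have hy := proj_perp hx. case: (hx) => xA xx. case: (hz) => zA zz.
have yx : (1 - x) * x = 0 by rewrite mulrBl mul1r xx subrr.
have h1 : (1 - x) * (x - z) * (1 - x) \in Pos.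
  by apply: (sSA3 H) => //; apply: proj_Pos.
have e : (1 - x) * (x - z) * (1 - x) = - ((1 - x) * z * (1 - x)).
  by rewrite (mulrBr (1 - x) x z) yx sub0r mulNr.
have h2 : (1 - x) * z * (1 - x) \in Pos.
  by apply: (sSA3 H); apply: proj_Pos.
have h0 : (1 - x) * z * (1 - x) = 0.
  by apply: (sPos_antisym H) => //; rewrite -e.
have [] := sSA4 H (proj1 hy) (proj_Pos hz) h0.
rewrite mulrBl mulrBr mul1r mulr1 => /subr0_eq e1 /subr0_eq e2.
by split.
Qed.

Lemma prod_le z x : proj A z -> proj A x -> z * x = z -> x * z = z -> sle Pos z x.
Proof.
move=> [zA zz] [xA xx] e1 e2; rewrite /sle.
have -> : x - z = (x - z) * (x - z).
  by rewrite mulrBl !mulrBr xx zz e1 e2 subrr subr0.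
by apply: (sSA2 H); apply: A_sub.
Qed.

Lemma A_mul_comm a b : a \in A -> b \in A -> a * b = b * a -> a * b \in A.
Proof.
move=> aA bA e.
have h : (a + b) * (a + b) - a * a - b * b = (a * b) *+ 2.
  rewrite mulrDl !mulrDr -e.
  by rewrite -!addrA addrC -!addrA [- (a * a) + _]addrC addrK subrr addr0 mulr2n.
have hA : (a * b) *+ 2 \in A.
  rewrite -h; apply: A_sub; first apply: A_sub.
  - by apply: (sPos_sub H); apply: (sSA2 H); apply: (sA_add H).
  - by apply: (sPos_sub H); apply: (sSA2 H).
  - by apply: (sPos_sub H); apply: (sSA2 H).
have -> : a * b = (2%:R)^-1 *: ((a * b) *+ 2).
  by rewrite -scaler_nat scalerA mulVf ?scale1r // pnatr_eq0.
by apply: (sA_scale H).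
Qed.

Lemma meet_unique x y m m' : is_meetP A Pos x y m -> is_meetP A Pos x y m' -> m = m'.
Proof.
move=> [hm [h1 [h2 h3]]] [hm' [h1' [h2' h3']]].
have a1 := h3' _ hm h1 h2. have a2 := h3 _ hm' h1' h2'.
move: a1 a2; rewrite /sle => a1 a2.
apply/esym/subr0_eq; apply: (sPos_antisym H) => //.
by rewrite opprB.
Qed.

Lemma meetC x y m : is_meetP A Pos x y m -> is_meetP A Pos y x m.
Proof. by move=> [hm [h1 [h2 h3]]]; do 3 (split => //); move=> z hz a b; apply: h3. Qed.

Lemma perpK x : 1 - (1 - x) = x :> E.
Proof. by rewrite opprB addrC subrK. Qed.

Lemma demorgan u v j : is_joinP A Pos u v j -> is_meetP A Pos (1 - u) (1 - v) (1 - j).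
Proof.
move=> [hj [h1 [h2 h3]]].
have e : forall s t : E, (1 - s) - (1 - t) = t - s.
  by move=> s t; rewrite opprB addrC addrA subrK.
split; first exact: proj_perp.
split; first by rewrite /sle e.
split; first by rewrite /sle e.
move=> z hz hu hv.
have e2 : forall s t : E, (1 - s) - t = (1 - t) - s.
  by move=> s t; rewrite -!addrA (addrC (- s)).
move: (h3 _ (proj_perp hz)); rewrite /sle (e2 z u) (e2 z v) (e2 z j).
by apply.
Qed.

Lemma meet_comm x y : proj A x -> proj A y -> x * y = y * x -> is_meetP A Pos x y (x * y).
Proof.
move=> hx hy e; case: (hx) => xA xx; case: (hy) => yA yy.
have hxy : proj A (x * y).
  split; first exact: A_mul_comm.
  by rewrite mulrA -(mulrA x y x) -e mulrA xx -mulrA yy.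
split=> //; split.
  apply: prod_le => //; first by rewrite -mulrA -e mulrA xx.
  by rewrite mulrA xx.
split.
  apply: prod_le => //; first by rewrite -mulrA yy.
  by rewrite mulrA -e -mulrA yy.
move=> z hz hzx hzy.
have [zx xz] := le_prod hz hx hzx. have [zy yz] := le_prod hz hy hzy.
apply: prod_le => //; first by rewrite mulrA zx zy.
by rewrite -mulrA yz xz.
Qed.

Lemma le_perp z x : proj A z -> proj A x -> sle Pos z (1 - x) -> z * x = 0 /\ x * z = 0.
Proof.
move=> hz hx h; have [e1 e2] := le_prod hz (proj_perp hx) h.
move: e1 e2; rewrite mulrBr mulrBl mulr1 mul1r => e1 e2.
split; apply: oppr_inj; rewrite oppr0; apply: (addrI z).
  by rewrite addr0. by rewrite addr0.
Qed.

Lemma core p q a b c rp rq :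
  proj A p -> proj A q -> is_meetP A Pos p q a -> is_meetP A Pos p (1 - q) b ->
  is_meetP A Pos (1 - p) q c ->
  rp = p - b - a -> rq = q - c - a -> proj A rp -> proj A rq -> rp * rq = rq * rp ->
  rp = 0.
Proof.
move=> hp hq ha hb hc erp erq hrp hrq hcomm.
case: (ha) => pa [ap [aq ga]]. case: (hb) => pb [bp [bq gb]]. case: (hc) => pc [cp [cq gc]].
have [ap' pa'] := le_prod pa hp ap. have [aq' qa'] := le_prod pa hq aq.
have [bp' pb'] := le_prod pb hp bp. have [bq' qb'] := le_perp pb hq bq.
have [cq' qc'] := le_prod pc hq cq. have [cp' pc'] := le_perp pc hp cp.
case: (hp) => _ pp. case: (hq) => _ qq. case: (pa) => _ aa. case: (pb) => _ bb.
have ab : a * b = 0 by rewrite -aq' -mulrA qb' mulr0.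
have ba : b * a = 0 by rewrite -qa' mulrA bq' mul0r.
have rpa : rp * a = 0 by rewrite erp !mulrBl pa' ba aa subr0 subrr.
have arp : a * rp = 0 by rewrite erp !mulrBr ap' ab aa subr0 subrr.
have rpb : rp * b = 0 by rewrite erp !mulrBl pb' bb ab subrr sub0r oppr0.
have rpp : rp * p = rp by rewrite erp !mulrBl pp bp' ap'.
have prp : p * rp = rp by rewrite erp !mulrBr pp pb' pa'.
have rqq : rq * q = rq by rewrite erq !mulrBl qq cq' aq'.
have qrq : q * rq = rq by rewrite erq !mulrBr qq qc' qa'.
have claim1 : forall z, proj A z -> sle Pos z rp -> sle Pos z rq -> z = 0.
  move=> z hz h1 h2.
  have [zr rz] := le_prod hz hrp h1. have [zs sz] := le_prod hz hrq h2.
  have zp : z * p = z by rewrite -zr -mulrA rpp.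
  have pz : p * z = z by rewrite -rz mulrA prp.
  have zq : z * q = z by rewrite -zs -mulrA rqq.
  have qz : q * z = z by rewrite -sz mulrA qrq.
  have [za _] := le_prod hz pa (ga z hz (prod_le hz hp zp pz) (prod_le hz hq zq qz)).
  by rewrite -za -zr -mulrA rpa mulr0.
have claim2 : forall z, proj A z -> sle Pos z rp -> sle Pos z (1 - rq) -> z = 0.
  move=> z hz h1 h2.
  have [zr rz] := le_prod hz hrp h1. have [zs sz] := le_perp hz hrq h2.
  have zp : z * p = z by rewrite -zr -mulrA rpp.
  have pz : p * z = z by rewrite -rz mulrA prp.
  have za : z * a = 0 by rewrite -zr -mulrA rpa mulr0.
  have az : a * z = 0 by rewrite -rz mulrA arp mul0r.
  have zc : z * c = 0 by rewrite -zp -mulrA pc' mulr0.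
  have cz : c * z = 0 by rewrite -pz mulrA cp' mul0r.
  have zq : z * q = 0 by move: zs; rewrite erq !mulrBr zc za !subr0.
  have qz : q * z = 0 by move: sz; rewrite erq !mulrBl cz az !subr0.
  have hle : sle Pos z (1 - q).
    by apply: prod_le => //; [exact: proj_perp | rewrite mulrBr mulr1 zq subr0 | rewrite mulrBl mul1r qz subr0].
  have [zb _] := le_prod hz pb (gb z hz (prod_le hz hp zp pz) hle).
  by rewrite -zb -zr -mulrA rpb mulr0.
have e1 : rp * rq = 0.
  by case: (meet_comm hrp hrq hcomm) => h0 [h1 [h2 _]]; apply: claim1.
have hc2 : rp * (1 - rq) = (1 - rq) * rp by rewrite mulrBr mulrBl mulr1 mul1r hcomm.
have e2 : rp * (1 - rq) = 0.
  by case: (meet_comm hrp (proj_perp hrq) hc2) => h0 [h1 [h2 _]]; apply: claim2.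
by move: e2; rewrite mulrBr mulr1 e1 subr0.
Qed.

Lemma subKr' (x y : E) : x - (x - y) = y.
Proof. by rewrite opprB addrC subrK. Qed.

Lemma main p q a b c m1 m2 rp rq :
  proj A p -> proj A q -> is_meetP A Pos p q a -> is_meetP A Pos p (1 - q) b ->
  is_meetP A Pos (1 - p) q c ->
  is_meetP A Pos p (1 - b) m1 -> is_meetP A Pos m1 (1 - a) rp ->
  is_meetP A Pos q (1 - c) m2 -> is_meetP A Pos m2 (1 - a) rq ->
    (commutes p q <-> (rp = 0 /\ rq = 0)) /\
    ((rp = 0 /\ rq = 0) <-> commutes rp rq).
Proof.
move=> hp hq ha hb hc hm1 hrp hm2 hrq.
case: (ha) => pa [ap [aq ga]]. case: (hb) => pb [bp [bq gb]]. case: (hc) => pc [cp [cq gc]].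
have [ap' pa'] := le_prod pa hp ap. have [aq' qa'] := le_prod pa hq aq.
have [bp' pb'] := le_prod pb hp bp. have [bq' qb'] := le_perp pb hq bq.
have [cq' qc'] := le_prod pc hq cq. have [cp' pc'] := le_perp pc hp cp.
case: (hp) => _ pp. case: (hq) => _ qq. case: (pa) => _ aa. case: (pb) => _ bb.
have ab : a * b = 0 by rewrite -aq' -mulrA qb' mulr0.
have ba : b * a = 0 by rewrite -qa' mulrA bq' mul0r.
have ac : a * c = 0 by rewrite -ap' -mulrA pc' mulr0.
have ca : c * a = 0 by rewrite -pa' mulrA cp' mul0r.
have em1 : m1 = p - b.
  have h := meet_comm hp (proj_perp pb) _.
  rewrite (meet_unique hm1 (h _)); first by rewrite mulrBr mulr1 pb'.
  by rewrite mulrBr mulrBl mulr1 mul1r pb' bp'.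
have em2 : m2 = q - c.
  have h := meet_comm hq (proj_perp pc) _.
  rewrite (meet_unique hm2 (h _)); first by rewrite mulrBr mulr1 qc'.
  by rewrite mulrBr mulrBl mulr1 mul1r qc' cq'.
rewrite em1 in hrp hm1; rewrite em2 in hrq hm2.
have erp : rp = p - b - a.
  have h := meet_comm (proj1 hm1) (proj_perp pa) _.
  rewrite (meet_unique hrp (h _)); first by rewrite mulrBr mulr1 mulrBl pa' ba subr0.
  by rewrite (mulrBr (p-b) 1 a) (mulrBl (p-b) 1 a) mulr1 mul1r mulrBl mulrBr pa' ba ap' ab.
have erq : rq = q - c - a.
  have h := meet_comm (proj1 hm2) (proj_perp pa) _.
  rewrite (meet_unique hrq (h _)); first by rewrite mulrBr mulr1 mulrBl qa' ca subr0.
  by rewrite (mulrBr (q-c) 1 a) (mulrBl (q-c) 1 a) mulr1 mul1r mulrBl mulrBr qa' ca aq' ac.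
have prp := proj1 hrp; have prq := proj1 hrq.
split; last first.
  split; first by case=> -> ->.
  move=> hcomm.
  have z1 := core hp hq ha hb hc erp erq prp prq hcomm.
  have z2 := core hq hp (meetC ha) (meetC hc) (meetC hb) erq erp prq prp (esym hcomm).
  by [].
split.
  move=> hpq.
  have ea : a = p * q := meet_unique ha (meet_comm hp hq hpq).
  have eb : b = p * (1 - q).
    apply: (meet_unique hb (meet_comm hp (proj_perp hq) _)).
    by rewrite mulrBr mulrBl mulr1 mul1r hpq.
  have ec : c = (1 - p) * q.
    apply: (meet_unique hc (meet_comm (proj_perp hp) hq _)).
    by rewrite mulrBr mulrBl mulr1 mul1r hpq.
  rewrite erp erq eb ec ea mulrBr mulr1 mulrBl mul1r hpq !subKr' !subrr.
  by split.
case=> e0 _.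
have ep : p = a + b.
  by move: e0; rewrite erp => /subr0_eq <-; rewrite subrK.
rewrite /commutes ep mulrDl mulrDr aq' bq' qa' qb'.
by [].
Qed.
End T.

Theorem corollary3p5 (E : algType Rreal) (A Pos : {pred E}) :
  synaptic A Pos ->
  forall p q : E, proj A p -> proj A q ->
  forall j1 j2 j3 m1 m2 rp rq : E,
    (* j1 = p^perp \/ q,  j2 = p^perp \/ q^perp,  j3 = p \/ q^perp *)
    is_joinP A Pos (perp p) q j1 ->
    is_joinP A Pos (perp p) (perp q) j2 ->
    is_joinP A Pos p (perp q) j3 ->
    (* rp = (p /\ j1) /\ j2,  rq = (q /\ j3) /\ j2 *)
    is_meetP A Pos p j1 m1 -> is_meetP A Pos m1 j2 rp ->
    is_meetP A Pos q j3 m2 -> is_meetP A Pos m2 j2 rq ->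
    (commutes p q <-> (rp = 0 /\ rq = 0)) /\
    ((rp = 0 /\ rq = 0) <-> commutes rp rq).
Proof.
move=> H p q hp hq j1 j2 j3 m1 m2 rp rq hj1 hj2 hj3 hm1 hrp hm2 hrq.
have ha := demorgan H hj2. have hb := demorgan H hj1. have hc := demorgan H hj3.
rewrite /perp !perpK in ha hb hc.
apply: (@main E A Pos H p q _ _ _ m1 m2 rp rq hp hq ha hb hc); by rewrite perpK.
Qed.
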